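(* For all integers $n\ge0$: \begin{align*} pl_4(4n+1)&\equiv pl_4(4n+2)+pl_4(4n+3)\pmod 4,\\ pl_4(4n+3)&\equiv 0\pmod 2,\\ pl_8(8n+5)\equiv pl_8(8n+6)&\equiv pl_8(8n+7)\equiv 0\pmod 2. \end{align*}
   Context: For a positive integer $k$, $pl_k(n)$ denotes the number of $k$-component plane partitions of $n$ (plane partitions of $n$ all of whose entries are $\le k$), with $pl_k(0)=1$ and $pl_k(n)=0$ for $n<0$; equivalently $\sum_{n\ge0}pl_k(n)q^n=\prod_{n=1}^{\infty}(1-q^n)^{-\min(k,n)}$. *)

(* Defs.v *)
From mathcomp Require Import all_boot.
Set Implicit Arguments. Unset Strict Implicit. Unset Printing Implicit Defensive.

Definition multichoose (c j : nat) : nat := 'C((c + j).-1, j).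

(* plk_upto k m n = coefficient of q^n in prod_{i=1}^{m} (1-q^i)^{-min(k,i)} *)
Fixpoint plk_upto (k m n : nat) : nat :=
  match m with
  | 0 => (n == 0)
  | m'.+1 => sumn [seq multichoose (minn k m'.+1) j * plk_upto k m' (n - j * m'.+1)
                | j <- iota 0 (n %/ m'.+1).+1]
  end.

(* pl_k(n): coefficient of q^n in prod_{m>=1} (1-q^m)^{-min(k,m)};
   factors with m > n do not contribute to the coefficient of q^n. *)
Definition pl (k n : nat) : nat := plk_upto k n n.

(* Main.v *)
Require Import Defs.
From mathcomp Require Import all_boot all_algebra.
From mathcomp Require Import zify ring.
Set Implicit Arguments. Unset Strict Implicit. Unset Printing Implicit Defensive.
Import GRing.Theory.
Local Open Scope ring_scope.

Definition zt (d : int) (T : nat) (p : {poly int}) : Prop :=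
  forall i, (i <= T)%N -> (d %| p`_i)%Z.

Lemma zt0 d T : zt d T 0.
Proof. by move=> i _; rewrite coef0. Qed.

Lemma ztD d T p q : zt d T p -> zt d T q -> zt d T (p + q).
Proof. by move=> hp hq i hi; rewrite coefD rpredD ?hp ?hq. Qed.

Lemma ztN d T p : zt d T p -> zt d T (- p).
Proof. by move=> hp i hi; rewrite coefN rpredN hp. Qed.

Lemma ztB d T p q : zt d T p -> zt d T q -> zt d T (p - q).
Proof. by move=> hp hq; apply: ztD => //; apply: ztN. Qed.

Lemma ztMl d T p q : zt d T p -> zt d T (q * p).
Proof.
move=> hp i hi; rewrite coefM rpred_sum // => j _.
apply: dvdz_mull; apply: hp; apply: leq_trans hi; exact: leq_subr.
Qed.

Lemma ztMr d T p q : zt d T p -> zt d T (p * q).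
Proof. by move=> hp; rewrite mulrC; apply: ztMl. Qed.

Lemma ztMM d e T p q : zt d T p -> zt e T q -> zt (d * e) T (p * q).
Proof.
move=> hp hq i hi; rewrite coefM rpred_sum // => j _.
apply: dvdz_mul; [apply: hp | apply: hq]; apply: leq_trans hi.
  by rewrite -ltnS.
exact: leq_subr.
Qed.

Lemma ztC d e T p : zt d T p -> zt (e * d) T (e%:P * p).
Proof. by move=> hp i hi; rewrite coefCM; apply: dvdz_mul => //; apply: hp. Qed.

Lemma ztW d e T p : (e %| d)%Z -> zt d T p -> zt e T p.
Proof. by move=> hed hp i hi; apply: dvdz_trans hed (hp i hi). Qed.

Lemma zt_0 d T p : zt 0 T p -> zt d T p.
Proof. by move=> hp i hi; move: (hp i hi); rewrite dvd0z => /eqP ->. Qed.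

Definition cong d T (p q : {poly int}) := zt d T (p - q).

Lemma cong_refl d T p : cong d T p p.
Proof. by rewrite /cong subrr; apply: zt0. Qed.

Lemma cong_sym d T p q : cong d T p q -> cong d T q p.
Proof. by rewrite /cong => h; rewrite -opprB; apply: ztN. Qed.

Lemma cong_trans d T p q r : cong d T p q -> cong d T q r -> cong d T p r.
Proof.
rewrite /cong => h1 h2; have -> : p - r = (p - q) + (q - r) by ring.
exact: ztD.
Qed.

Lemma cong_Ml d T p q r : cong d T p q -> cong d T (r * p) (r * q).
Proof. by rewrite /cong -mulrBr; apply: ztMl. Qed.

Lemma cong_Mr d T p q r : cong d T p q -> cong d T (p * r) (q * r).
Proof. by rewrite /cong -mulrBl; apply: ztMr. Qed.

Lemma cong_M d T a b c e : cong d T a b -> cong d T c e -> cong d T (a * c) (b * e).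
Proof. by move=> h1 h2; apply: cong_trans (cong_Mr _ h1) (cong_Ml _ h2). Qed.

Lemma cong_D d T a b c e : cong d T a b -> cong d T c e -> cong d T (a + c) (b + e).
Proof.
rewrite /cong => h1 h2; have -> : a + c - (b + e) = (a - b) + (c - e) by ring.
exact: ztD.
Qed.

Lemma cong_0 d T p q : cong 0 T p q -> cong d T p q.
Proof. exact: zt_0. Qed.

Lemma cong_zt d T p q : cong d T p q -> zt d T q -> zt d T p.
Proof. rewrite /cong => h1 h2; rewrite -(subrK q p); exact: ztD. Qed.
Lemma zt_inv d T (V Y : {poly int}) : V`_0 = 1 -> zt d T (V * Y) -> zt d T Y.
Proof.
move=> V0 h.
suff H : forall n i, (i <= n)%N -> (i <= T)%N -> (d %| Y`_i)%Z.
  by move=> i hi; apply: (H i).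
elim=> [|n IH] i hin hiT.
  move: (h i hiT); rewrite coefM; move: hin; rewrite leqn0 => /eqP ->.
  by rewrite big_ord1 V0 mul1r subn0.
move: (h i hiT); rewrite coefM big_ord_recl V0 mul1r subn0.
have H2 : (d %| \sum_(j < i) V`_(bump 0 j) * Y`_(i - bump 0 j))%Z.
  rewrite rpred_sum // => j _; apply: dvdz_mull; apply: IH.
    have := ltn_ord j; rewrite /bump leq0n add1n; lia.
  apply: leq_trans hiT; exact: leq_subr.
move=> H1; have -> : Y`_i = (Y`_i + \sum_(j < i) V`_(bump 0 j) * Y`_(i - bump 0 j))
  - \sum_(j < i) V`_(bump 0 j) * Y`_(i - bump 0 j) by ring.
by rewrite rpredB.
Qed.

Definition supp (s : nat) (p : {poly int}) := forall i, ~~ (s %| i)%N -> p`_i = 0.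

Lemma supp1 s : supp s 1.
Proof. by move=> i hi; rewrite coef1; case: eqP hi => // ->; rewrite dvdn0. Qed.

Lemma suppM s p q : supp s p -> supp s q -> supp s (p * q).
Proof.
move=> hp hq i hi; rewrite coefM big1 // => j _.
case hj: (s %| j)%N; last by rewrite hp ?hj // mul0r.
rewrite hq ?mulr0 //; apply/negP => hij; move/negP: hi; apply.
have := ltn_ord j; rewrite ltnS => hji.
by rewrite -(subnK hji) dvdn_add.
Qed.

Lemma suppX s p n : supp s p -> supp s (p ^+ n).
Proof.
move=> hp; elim: n => [|n IH]; first by rewrite expr0; apply: supp1.
by rewrite exprS; apply: suppM.
Qed.

Lemma supp_prod s (I : Type) (r : seq I) (F : I -> {poly int}) :
  (forall i, supp s (F i)) -> supp s (\prod_(i <- r) F i).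
Proof.
move=> h; elim: r => [|a r IH]; first by rewrite big_nil; apply: supp1.
by rewrite big_cons; apply: suppM.
Qed.

Lemma supp_factor s i : supp s (1 - 'X^(s * i)).
Proof.
move=> j hj; rewrite coefB coef1 coefXn.
have -> : (j == 0)%N = false by apply/negP => /eqP h; move: hj; rewrite h dvdn0.
have -> : (j == s * i)%N = false.
  by apply/negP => /eqP h; move: hj; rewrite h dvdn_mulr.
by rewrite subr0.
Qed.

Definition filt (Pr : pred nat) (p : {poly int}) :=
  \poly_(i < size p) (if Pr i then p`_i else 0).

Lemma coef_filt Pr p i : (filt Pr p)`_i = if Pr i then p`_i else 0.
Proof.
rewrite /filt coef_poly; case: ltnP => // hi.
by rewrite nth_default //; case: (Pr i).
Qed.

Lemma filtD Pr p q : filt Pr (p + q) = filt Pr p + filt Pr q.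
Proof. by apply/polyP => i; rewrite coefD !coef_filt coefD; case: (Pr i); rewrite ?addr0. Qed.

Lemma filtN Pr p : filt Pr (- p) = - filt Pr p.
Proof. by apply/polyP => i; rewrite coefN !coef_filt coefN; case: (Pr i); rewrite ?oppr0. Qed.

Lemma filt_zt Pr d T p : zt d T p -> zt d T (filt Pr p).
Proof. by move=> h i hi; rewrite coef_filt; case: (Pr i) => //; apply: h. Qed.

Lemma filt_cong Pr d T p q : cong d T p q -> cong d T (filt Pr p) (filt Pr q).
Proof. by rewrite /cong -filtN -filtD; apply: filt_zt. Qed.

Lemma filt_mul (Pr Qr : pred nat) (p q : {poly int}) :
  (forall j i, p`_j != 0 -> (j <= i)%N -> Pr i = Qr (i - j)%N) ->
  filt Pr (p * q) = p * filt Qr q.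
Proof.
move=> h; apply/polyP => i; rewrite coef_filt !coefM.
case hP: (Pr i).
  apply: eq_bigr => j _; rewrite coef_filt.
  case: (eqVneq p`_j 0) => [->|hj]; first by rewrite !mul0r.
  by rewrite -(h j i hj) ?hP // -ltnS.
rewrite big1 // => j _; rewrite coef_filt.
case: (eqVneq p`_j 0) => [->|hj]; first by rewrite !mul0r.
by rewrite -(h j i hj) ?hP ?mulr0 // -ltnS.
Qed.

Lemma filt_mul_supp s (Pr : pred nat) (p q : {poly int}) :
  supp s p -> (forall j i, (s %| j)%N -> (j <= i)%N -> Pr i = Pr (i - j)%N) ->
  filt Pr (p * q) = p * filt Pr q.
Proof.
move=> hs h; apply: filt_mul => j i hj hji; apply: h => //.
by apply/negP => /negP hn; move: hj; rewrite hs // eqxx.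
Qed.
Definition P (s M : nat) : {poly int} := \prod_(1 <= i < M.+1) (1 - 'X^(s * i)).

Lemma suppP s M : supp s (P s M).
Proof. by apply: supp_prod => i; apply: supp_factor. Qed.

Lemma coef0_prod (r : seq nat) (F : nat -> {poly int}) :
  (forall i, (F i)`_0 = 1) -> (\prod_(i <- r) F i)`_0 = 1.
Proof.
move=> h; elim: r => [|a r IH]; first by rewrite big_nil coef1.
by rewrite big_cons coef0M h IH mul1r.
Qed.

Lemma coef0X (p : {poly int}) n : p`_0 = 1 -> (p ^+ n)`_0 = 1.
Proof.
move=> h; elim: n => [|n IH]; first by rewrite expr0 coef1.
by rewrite exprS coef0M h IH mul1r.
Qed.

Lemma P0 s M : (0 < s)%N -> (P s M)`_0 = 1.
Proof.
move=> hs; apply: coef0_prod => i; rewrite coefB coef1 coefXn /=.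
(* i may be 0 in the generic statement *)
Abort.

Lemma P0 s M : (0 < s)%N -> (P s M)`_0 = 1.
Proof.
move=> hs; rewrite /P big_nat_cond.
elim: (index_iota 1 M.+1) => [|a r IH]; first by rewrite big_nil coef1.
rewrite big_cons; case: ifP => // /andP [] /andP [ha _] _.
rewrite coef0M IH mulr1 coefB coef1 coefXn /=.
have -> : (0 == s * a)%N = false by apply/negP => /eqP h; move: h; lia.
by rewrite subr0.
Qed.

Lemma factor_cong a T : cong 2 T ((1 - 'X^a) ^+ 2) (1 - 'X^(a * 2)).
Proof.
rewrite /cong exprM.
have -> : (1 - 'X^a) ^+ 2 - (1 - 'X^a ^+ 2) = (2:int)%:P * ('X^a ^+ 2 - 'X^a) :> {poly int}.
  rewrite (_ : (2:int) = 1 + 1) // polyCD polyC1; ring.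
have -> : (2:int) = 2 * 1 by [].
by apply: ztC => i _; apply: dvd1z.
Qed.

Lemma frob2 s M T : cong 2 T (P s M ^+ 2) (P (s * 2) M).
Proof.
rewrite /P -prodrXl.
elim: (index_iota 1 M.+1) => [|a r IH]; first by rewrite !big_nil; apply: cong_refl.
rewrite !big_cons; apply: cong_M => //.
have -> : (s * 2 * a = s * a * 2)%N by lia.
exact: factor_cong.
Qed.

Lemma frob_sq4 T (A B : {poly int}) : cong 2 T A B -> cong 4 T (A ^+ 2) (B ^+ 2).
Proof.
rewrite /cong => h.
have -> : A ^+ 2 - B ^+ 2 = (A - B) * (A - B) + (2:int)%:P * (B * (A - B)).
  rewrite (_ : (2:int) = 1 + 1) // polyCD polyC1; ring.
apply: ztD; first by have -> : (4:int) = 2 * 2 by []; apply: ztMM.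
have -> : (4:int) = 2 * 2 by [].
by apply: ztC; apply: ztMl.
Qed.

Lemma frob4 s M T : cong 4 T (P s M ^+ 4) (P (s * 2) M ^+ 2).
Proof. by rewrite (_ : 4 = 2 * 2)%N // exprM; apply: frob_sq4; apply: frob2. Qed.

Lemma cong_sq d T (A B : {poly int}) : cong d T A B -> cong d T (A ^+ 2) (B ^+ 2).
Proof. by move=> h; rewrite !expr2; apply: cong_M. Qed.

Lemma frobP4 M T : cong 2 T (P 1 M ^+ 4) (P 4 M).
Proof.
rewrite (_ : 4 = 2 * 2)%N // exprM.
exact: (cong_trans (cong_sq (@frob2 1 M T)) (@frob2 2 M T)).
Qed.

Lemma frobP8 M T : cong 2 T (P 1 M ^+ 8) (P 8 M).
Proof.
rewrite (_ : 8 = 4 * 2)%N // exprM.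
exact: (cong_trans (cong_sq (@frobP4 M T)) (@frob2 4 M T)).
Qed.
Lemma eq_cong d T (p q : {poly int}) : (forall i, (i <= T)%N -> p`_i = q`_i) -> cong d T p q.
Proof. by move=> h i hi; rewrite coefB h // subrr dvdz0. Qed.

Lemma cong_eq T (p q : {poly int}) : cong 0 T p q -> forall i, (i <= T)%N -> p`_i = q`_i.
Proof. by move=> h i hi; move: (h i hi); rewrite coefB dvd0z subr_eq0 => /eqP. Qed.

Lemma mc0 c : multichoose c 0 = 1%N.
Proof. by rewrite /multichoose bin0. Qed.

Lemma mc_pascal c t : multichoose c.+1 t.+1 = (multichoose c t.+1 + multichoose c.+1 t)%N.
Proof.
rewrite /multichoose.
have -> : ((c.+1 + t.+1).-1 = (c + t).+1)%N by rewrite addSn addnS.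
have -> : ((c + t.+1).-1 = c + t)%N by rewrite addnS.
have -> : ((c.+1 + t).-1 = c + t)%N by rewrite addSn.
by rewrite binS.
Qed.

Definition G (c d T : nat) : {poly int} :=
  \poly_(i < T.+1) (if (d %| i)%N then (multichoose c (i %/ d))%:Z else 0).

Lemma G_step d c T : (0 < d)%N -> cong 0 T ((1 - 'X^d) * G c.+1 d T) (G c d T).
Proof.
move=> hd; apply: eq_cong => i hi.
rewrite mulrBl mul1r coefB coefXnM !coef_poly ltnS hi.
case: ltnP => hid.
  rewrite subr0; case hdi: (d %| i)%N => //.
  by rewrite divn_small // !mc0.
rewrite (leq_ltn_trans (leq_subr d i)) ?ltnS //.
case hdi: (d %| i)%N.
  move/dvdnP: hdi => [t ht]; subst i.
  have ht1 : (0 < t)%N by rewrite lt0n; apply/eqP => ht0; move: hid; rewrite ht0 mul0n leqNgt hd.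
  have -> : (t * d - d = (t - 1) * d)%N by rewrite mulnBl mul1n.
  rewrite dvdn_mull // !mulnK //.
  clear hid hi; case: t ht1 => // t _; rewrite subn1 /= mc_pascal PoszD.
  by rewrite addrK.
have -> : (d %| i - d)%N = false.
  apply/negP => h; move/negP: hdi; apply.
  by rewrite -(subnK hid) dvdn_add.
by rewrite subr0.
Qed.

Lemma G0 d T : (0 < d)%N -> cong 0 T (G 0 d T) 1.
Proof.
move=> hd; apply: eq_cong => i hi; rewrite coef_poly ltnS hi coef1.
case: (posnP i) => [->|hi0]; first by rewrite dvdn0 div0n mc0.
case hdi: (d %| i)%N => //.
rewrite /multichoose add0n bin_small //.
rewrite prednK // divn_gt0 //; exact: dvdn_leq.
Qed.

Lemma G_inv c d T : (0 < d)%N -> cong 0 T ((1 - 'X^d) ^+ c * G c d T) 1.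
Proof.
move=> hd; elim: c => [|c IH]; first by rewrite expr0 mul1r; apply: G0.
rewrite exprSr -mulrA.
exact: cong_trans (cong_Ml _ (@G_step d c T hd)) IH.
Qed.
Lemma sum_div (d n : nat) (h : nat -> nat) : (0 < d)%N ->
  (\sum_(j < n.+1) (if (d %| j)%N then h (j %/ d) else 0%N) = \sum_(t < (n %/ d).+1) h t)%N.
Proof.
move=> hd; elim: n => [|n IH].
  by rewrite div0n !big_ord1 dvdn0 div0n.
rewrite big_ord_recr /= IH divnS //.
case hdn: (d %| n.+1)%N; last by rewrite addn0 add0n.
rewrite add1n [in RHS]big_ord_recr /=; done.
Qed.

Definition pp (k m T : nat) : {poly int} := \poly_(i < T.+1) (plk_upto k m i)%:Z.

Lemma pp_step k m T :
  cong 0 T (pp k m.+1 T) (G (minn k m.+1) m.+1 T * pp k m T).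
Proof.
apply: eq_cong => i hi; rewrite coefM coef_poly ltnS hi /=.
set d := m.+1; set c := minn k d.
pose h t := (multichoose c t * plk_upto k m (i - t * d))%N.
transitivity (\sum_(j < i.+1) Posz (if (d %| j)%N then h (j %/ d)%N else 0%N)).
  rewrite -(big_morph Posz PoszD (erefl (Posz 0))) sum_div //.
  rewrite sumnE big_map -(big_mkord xpredT) /index_iota subn0.
  by rewrite /= big_cons.

apply: eq_bigr => j _.
have hj : (j <= i)%N by rewrite -ltnS.
rewrite !coef_poly ltnS (leq_trans hj hi) ltnS (leq_trans (leq_subr _ _) hi).
case hdj: (d %| j)%N; last by rewrite mul0r.
by rewrite /h divnK // PoszM.
Qed.

Definition S (k m : nat) : {poly int} := \prod_(1 <= i < m.+1) (1 - 'X^i) ^+ minn k i.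

Lemma S_pp k m T : cong 0 T (S k m * pp k m T) 1.
Proof.
elim: m => [|m IH].
  rewrite /S big_geq // mul1r; apply: eq_cong => i hi.
  by rewrite coef_poly ltnS hi coef1 /=; case: (i == 0%N).
rewrite /S big_nat_recr //= -/(S k m).
apply: cong_trans (cong_Ml _ (@pp_step k m T)) _.
have -> : S k m * (1 - 'X^(m.+1)) ^+ minn k m.+1 * (G (minn k m.+1) m.+1 T * pp k m T)
  = (S k m * pp k m T) * ((1 - 'X^(m.+1)) ^+ minn k m.+1 * G (minn k m.+1) m.+1 T) by ring.
have := cong_M IH (@G_inv (minn k m.+1) m.+1 T (ltn0Sn m)).
by rewrite mulr1.
Qed.
Definition mul1X (a : nat) (s : seq int) : seq int :=
  [seq s`_i - (if (a <= i)%N then s`_(i - a) else 0) | i <- iota 0 (size s + a)%N].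

Lemma mul1X_Poly a s : Poly (mul1X a s) = (1 - 'X^a) * Poly s.
Proof.
apply/polyP => i; rewrite coef_Poly mulrBl mul1r coefB coefXnM !coef_Poly.
rewrite /mul1X; case: (ltnP i (size s + a)%N) => hi.
  rewrite (nth_map 0%N) ?size_iota // nth_iota // add0n.
  by case: (leqP a i) => h2.
rewrite (nth_default _ (s := map _ _)) ?size_map ?size_iota //.
rewrite (@nth_default _ 0 s i); last by apply: leq_trans hi; rewrite leq_addr.
case: ltnP => h1; first by rewrite subr0.
by rewrite (@nth_default _ 0 s (i - a)%N) ?subr0 // leq_subRL // addnC.
Qed.

Definition blist_of (e : nat -> nat) (r : seq nat) : seq int :=
  foldr (fun i s => iter (e i) (mul1X i) s) [:: 1] r.

Lemma prod_blist (e : nat -> nat) (r : seq nat) :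
  \prod_(i <- r) (1 - 'X^i) ^+ e i = Poly (blist_of e r).
Proof.
elim: r => [|a r IH].
  rewrite big_nil (_ : blist_of e [::] = [:: 1]) //; apply/polyP => i; rewrite coef1 coef_Poly.
  by case: i => [|[|i]].
rewrite big_cons IH /=; elim: (e a) => [|n IHn]; first by rewrite expr0 mul1r.
by rewrite /= mul1X_Poly -IHn exprS mulrA.
Qed.

Definition Bp (k M : nat) : {poly int} := \prod_(1 <= i < M.+1) (1 - 'X^i) ^+ (k - minn k i).

Lemma Bp_fix k M : (k <= M)%N -> Bp k M = Poly (blist_of (fun i => k - minn k i)%N (index_iota 1 k.+1)).
Proof.
move=> hkM; rewrite /Bp (big_cat_nat _ (n := k.+1)) //.
rewrite [X in _ _ X = _]big_nat_cond [X in _ _ X = _]big1 ?Monoid.mulm1.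
  exact: prod_blist.
move=> i /andP [/andP [hi _] _].
by rewrite (minn_idPl (ltnW hi)) subnn expr0.
Qed.

Definition b4 := Eval vm_compute in blist_of (fun i => 4 - minn 4 i)%N (index_iota 1 5).
Definition b8 := Eval vm_compute in blist_of (fun i => 8 - minn 8 i)%N (index_iota 1 9).
Definition Yop (a b c : nat) (p : {poly int}) : {poly int} :=
  'X^2 * filt (fun i => i %% 4 == a)%N p - 'X * filt (fun i => i %% 4 == b)%N p
  - filt (fun i => i %% 4 == c)%N p.

Definition Ycoef (a b c : nat) (f : nat -> int) (i : nat) : int :=
  (if (i < 2)%N then 0 else (if ((i - 2) %% 4 == a)%N then f (i - 2)%N else 0))
  - (if (i == 0)%N then 0 else (if (i.-1 %% 4 == b)%N then f i.-1 else 0))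
  - (if (i %% 4 == c)%N then f i else 0).

Lemma coef_Yop a b c s i : (Yop a b c (Poly s))`_i = Ycoef a b c (nth 0 s) i.
Proof. by rewrite /Yop !coefB coefXnM coefXM !coef_filt !coef_Poly. Qed.

Lemma coef_Yop' a b c p i : (Yop a b c p)`_i = Ycoef a b c (fun j => p`_j) i.
Proof. by rewrite /Yop !coefB coefXnM coefXM !coef_filt. Qed.

Lemma Ycoef_big a b c s i : (size s + 2 <= i)%N -> Ycoef a b c (nth 0 s) i = 0.
Proof.
move=> h; rewrite /Ycoef !nth_default ?if_same ?subr0 //; lia.
Qed.

Lemma Ycheck (d : int) a b c s :
  all (fun i => d %| Ycoef a b c (nth 0 s) i)%Z (iota 0 (size s + 2)) ->
  forall i, (d %| (Yop a b c (Poly s))`_i)%Z.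
Proof.
move=> /allP h i; rewrite coef_Yop; case: (ltnP i (size s + 2)) => hi.
  by apply: h; rewrite mem_iota.
by rewrite Ycoef_big // dvdz0.
Qed.

Lemma Fcheck (d : int) (m r : nat) s :
  all (fun i => d %| (if (i %% m == r)%N then nth 0 s i else 0))%Z (iota 0 (size s)) ->
  forall i, (d %| (filt (fun i => i %% m == r)%N (Poly s))`_i)%Z.
Proof.
move=> /allP h i; rewrite coef_filt coef_Poly; case: (ltnP i (size s)) => hi.
  by apply: h; rewrite mem_iota.
by rewrite nth_default // if_same dvdz0.
Qed.

Lemma chk1 i : (4 %| (Yop 1 2 3 (Poly b4))`_i)%Z.
Proof. by apply: Ycheck; vm_compute. Qed.
Lemma chk2 i : (2 %| (Yop 3 0 1 (Poly b4))`_i)%Z.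
Proof. by apply: Ycheck; vm_compute. Qed.
Lemma chk3 i : (2 %| (filt (fun i => i %% 4 == 3)%N (Poly b4))`_i)%Z.
Proof. by apply: Fcheck; vm_compute. Qed.
Lemma chk5 i : (2 %| (filt (fun i => i %% 8 == 5)%N (Poly b8))`_i)%Z.
Proof. by apply: Fcheck; vm_compute. Qed.
Lemma chk6 i : (2 %| (filt (fun i => i %% 8 == 6)%N (Poly b8))`_i)%Z.
Proof. by apply: Fcheck; vm_compute. Qed.
Lemma chk7 i : (2 %| (filt (fun i => i %% 8 == 7)%N (Poly b8))`_i)%Z.
Proof. by apply: Fcheck; vm_compute. Qed.
Lemma plk_stable k m n : (n <= m)%N -> plk_upto k m n = pl k n.
Proof.
elim: m => [|m IH] hn; first by move: hn; rewrite leqn0 => /eqP ->.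
case: (ltngtP n m.+1) => h; last by rewrite h.
- rewrite -IH // /= divn_small //= mc0 mul1n subn0 addn0 //.
- by move: hn; rewrite leqNgt h.
Qed.

Lemma pp_coef k M T j : (j <= T)%N -> (T <= M)%N -> (pp k M T)`_j = (pl k j)%:Z.
Proof.
move=> hj hT; rewrite coef_poly ltnS hj plk_stable //; exact: leq_trans hT.
Qed.

Lemma PS k M : P 1 M ^+ k = S k M * Bp k M.
Proof.
rewrite /P -prodrXl /S /Bp -big_split /=; apply: eq_bigr => i _.
by rewrite mul1n -exprD subnKC // geq_minl.
Qed.

Lemma main_id k M T : cong 0 T (P 1 M ^+ k * pp k M T) (Bp k M).
Proof.
rewrite PS (_ : S k M * Bp k M * pp k M T = Bp k M * (S k M * pp k M T)); last by ring.
have := cong_Ml (Bp k M) (@S_pp k M T).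
by rewrite mulr1.
Qed.

Lemma mod_shift s r j i : (s %| j)%N -> (j <= i)%N -> (i %% s == r)%N = ((i - j)%N %% s == r)%N.
Proof.
move=> /dvdnP [t ->] hji.
by rewrite -{1}(subnK hji) addnC modnMDl.
Qed.

Lemma res2 k s r N T M (bl : seq int) : (0 < s)%N -> (N <= T)%N -> (T <= M)%N ->
  (N %% s = r)%N -> cong 2 T (P 1 M ^+ k) (P s M) -> Bp k M = Poly bl ->
  (forall i, (2 %| (filt (fun i => i %% s == r)%N (Poly bl))`_i)%Z) ->
  (2 %| (pl k N)%:Z)%Z.
Proof.
move=> hs hN hT hNr hfrob hbl hchk.
have h0 := cong_0 2 (@main_id k M T); rewrite hbl in h0.
have h1 := cong_trans (cong_sym (cong_Mr (pp k M T) hfrob)) h0.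
have h2 := filt_cong (fun i => i %% s == r)%N h1.
rewrite (filt_mul_supp _ (@suppP s M)) in h2; last by move=> j i; apply: mod_shift.
have h3 : zt 2 T (P s M * filt (fun i => i %% s == r)%N (pp k M T)).
  exact: (cong_zt h2 (fun i _ => hchk i)).
have h4 := zt_inv (@P0 s M hs) h3.
have := h4 N hN; rewrite coef_filt hNr eqxx pp_coef //.
Qed.
Lemma YopD a b c p q : Yop a b c (p + q) = Yop a b c p + Yop a b c q.
Proof. rewrite /Yop !filtD; ring. Qed.

Lemma YopN a b c p : Yop a b c (- p) = - Yop a b c p.
Proof. rewrite /Yop !filtN; ring. Qed.

Lemma cong_Y a b c d T p q : cong d T p q -> cong d T (Yop a b c p) (Yop a b c q).
Proof.
rewrite /cong => h; rewrite -YopN -YopD /Yop.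
apply: ztB; first apply: ztB.
all: try apply: ztMl.
all: by apply: filt_zt.
Qed.

Lemma Yop_supp a b c V p : supp 4 V -> Yop a b c (V * p) = V * Yop a b c p.
Proof.
move=> hV; rewrite /Yop !(filt_mul_supp _ hV); first ring.
all: by move=> j i; apply: mod_shift.
Qed.

Lemma Yop_off2 (p q : {poly int}) : (forall j, p`_j != 0 -> (j %% 4 == 2)%N) ->
  Yop 1 2 3 (p * q) = p * Yop 3 0 1 q.
Proof.
move=> hp; rewrite /Yop (@filt_mul (fun i => i %% 4 == 1)%N (fun i => i %% 4 == 3)%N)
  1?(@filt_mul (fun i => i %% 4 == 2)%N (fun i => i %% 4 == 0)%N)
  1?(@filt_mul (fun i => i %% 4 == 3)%N (fun i => i %% 4 == 1)%N); first ring.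
all: move=> j i /hp /eqP hj hji; apply/idP/idP => /eqP H; apply/eqP; lia.
Qed.

Lemma b4_eq M : (4 <= M)%N -> Bp 4 M = Poly b4.
Proof. by move=> h; rewrite Bp_fix //; congr Poly; vm_compute. Qed.

Lemma b8_eq M : (8 <= M)%N -> Bp 8 M = Poly b8.
Proof. by move=> h; rewrite Bp_fix //; congr Poly; vm_compute. Qed.

Lemma res4 n T M : (4 * n + 3 <= T)%N -> (T <= M)%N -> (4 <= M)%N ->
  (4 %| (pl 4 (4 * n + 1))%:Z - (pl 4 (4 * n + 2))%:Z - (pl 4 (4 * n + 3))%:Z)%Z.
Proof.
move=> hN hT hM.
set F := pp 4 M T; set J := P 2 M ^+ 2; set V := P 4 M ^+ 2.
have h0 := cong_0 4 (@main_id 4 M T); rewrite b4_eq // in h0.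
have h1 := @frob4 1 M T.
have hJF : cong 4 T (J * F) (Poly b4) := cong_trans (cong_sym (cong_Mr F h1)) h0.
have hJJF := cong_Ml J hJF.
have hV := @frob4 2 M T.
have e : J * (J * F) = P 2 M ^+ 4 * F by rewrite mulrA -exprD.
rewrite e in hJJF.
have hVF : cong 4 T (V * F) (J * Poly b4) := cong_trans (cong_sym (cong_Mr F hV)) hJJF.
have hY := cong_Y 1 2 3 hVF.
have hsV : supp 4 V by apply: suppX; apply: suppP.
rewrite Yop_supp // in hY.
set J0 := filt (fun i => i %% 4 == 0)%N J; set J2 := filt (fun i => i %% 4 == 2)%N J.
have hsJ : supp 2 J by apply: suppX; apply: suppP.
have eJ : J = J0 + J2.
  apply/polyP => i; rewrite coefD !coef_filt.
  case: (boolP (i %% 4 == 0)%N) => h1'; first by rewrite (_ : (i %% 4 == 2)%N = false) ?addr0 //; lia.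
  case: (boolP (i %% 4 == 2)%N) => h2'; first by rewrite add0r.
  by rewrite add0r hsJ //; lia.
have hsJ0 : supp 4 J0.
  move=> i hi; rewrite coef_filt (_ : (i %% 4 == 0)%N = false) //; lia.
have hJ2 : forall j, J2`_j != 0 -> (j %% 4 == 2)%N.
  by move=> j; rewrite coef_filt; case: (j %% 4 == 2)%N => //; rewrite eqxx.
have hzJ2 : zt 2 T J2.
  have := filt_cong (fun i => i %% 4 == 2)%N (@frob2 2 M T).
  rewrite /cong => hc.
  have -> : J2 = (J2 - filt (fun i => i %% 4 == 2)%N (P (2 * 2) M))
     + filt (fun i => i %% 4 == 2)%N (P (2 * 2) M) by rewrite subrK.
  apply: ztD => // i _; rewrite coef_filt.
  case: (boolP (i %% 4 == 2)%N) => h //; rewrite (@suppP 4 M) ?dvdz0 //; lia.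
have hzYJB : zt 4 T (Yop 1 2 3 (J * Poly b4)).
  rewrite eJ mulrDl YopD (Yop_supp _ _ _ _ hsJ0) Yop_off2 //.
  apply: ztD; first by apply: ztMl => i _; apply: chk1.
  by rewrite (_ : 4 = 2 * 2) //; apply: ztMM => // i _; apply: chk2.
have hz : zt 4 T (V * Yop 1 2 3 F) := cong_zt hY hzYJB.
have hV0 : V`_0 = 1 by apply: coef0X; apply: P0.
have := zt_inv hV0 hz hN.
rewrite coef_Yop' /Ycoef.
rewrite (_ : (4 * n + 3 < 2)%N = false); last lia.
rewrite (_ : (4 * n + 3 == 0)%N = false); last lia.
rewrite (_ : ((4 * n + 3 - 2) %% 4 == 1)%N = true); last lia.
rewrite (_ : ((4 * n + 3).-1 %% 4 == 2)%N = true); last lia.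
rewrite (_ : ((4 * n + 3) %% 4 == 3)%N = true); last lia.
rewrite (_ : (4 * n + 3 - 2 = 4 * n + 1)%N); last lia.
rewrite (_ : ((4 * n + 3).-1 = 4 * n + 2)%N); last lia.
rewrite /F !pp_coef //; lia.
Qed.
Lemma to_nat2 (m : nat) : (2 %| m%:Z)%Z -> m = 0 %[mod 2].
Proof. by rewrite dvdzE /= mod0n => /eqP. Qed.

Lemma to_nat4 (a b c : nat) : (4 %| a%:Z - b%:Z - c%:Z)%Z -> a = b + c %[mod 4].
Proof.
rewrite -addrA -opprD -PoszD -eqz_mod_dvd !modz_nat => /eqP h.
by case: h.
Qed.

Local Close Scope ring_scope.

Theorem theorem3 (n : nat) :
  [/\ pl 4 (4 * n + 1) = pl 4 (4 * n + 2) + pl 4 (4 * n + 3) %[mod 4],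
      pl 4 (4 * n + 3) = 0 %[mod 2],
      pl 8 (8 * n + 5) = 0 %[mod 2],
      pl 8 (8 * n + 6) = 0 %[mod 2]
    & pl 8 (8 * n + 7) = 0 %[mod 2]].
Proof.
set T := 8 * n + 7; set M := T + 8.
have hTM : T <= M by rewrite /M /T; lia.
have hM4 : 4 <= M by rewrite /M /T; lia.
have hM8 : 8 <= M by rewrite /M /T; lia.
split.
- apply: to_nat4; apply: (@res4 n T M) => //; rewrite /T; lia.
- apply: to_nat2; apply: (@res2 4 4 3 _ T M b4) => //;
  (exact: frobP4 || exact: b4_eq || exact: chk3 || (rewrite /T; lia) || lia).
- apply: to_nat2; apply: (@res2 8 8 5 _ T M b8) => //;
  (exact: frobP8 || exact: b8_eq || exact: chk5 || (rewrite /T; lia) || lia).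
- apply: to_nat2; apply: (@res2 8 8 6 _ T M b8) => //;
  (exact: frobP8 || exact: b8_eq || exact: chk6 || (rewrite /T; lia) || lia).
- apply: to_nat2; apply: (@res2 8 8 7 _ T M b8) => //;
  (exact: frobP8 || exact: b8_eq || exact: chk7 || (rewrite /T; lia) || lia).
Qed.
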